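(* Every regular triangulation of $[0,1]^L$ is induced by some generic fitness landscape $w:\{0,1\}^L\to\mathbb{R}_{\ge 0}$ that has exactly one peak.
   Context: Genotypes $g\in\{0,1\}^L$ are vertices of $[0,1]^L$. The triangulation induced by $w$ is the regular subdivision of $[0,1]^L$ obtained by projecting the upper faces of $\mathrm{conv}\{(g,w_g)\}\subset\mathbb{R}^{L+1}$; a triangulation is regular if induced in this way; $w$ is generic if all $w_g$ are distinct and the induced subdivision is a triangulation. A peak is a genotype all of whose Hamming neighbours have strictly lower fitness. *)

(* Defs.v *)
From HB Require Import structures.
From mathcomp Require Import all_boot all_order all_algebra.
From mathcomp Require Import reals.
Set Implicit Arguments. Unset Strict Implicit. Unset Printing Implicit Defensive.
Import Order.TTheory GRing.Theory Num.Theory.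
Local Open Scope ring_scope.

(* Genotypes g in {0,1}^L, i.e. vertices of the cube [0,1]^L. *)
Definition genotype (L : nat) := {ffun 'I_L -> bool}.

Definition coord (R : realType) (L : nat) (g : genotype L) (i : 'I_L) : R :=
  (g i : nat)%:R.

Definition aff (R : realType) (L : nat) (a : 'I_L -> R) (b : R) (g : genotype L) : R :=
  b + \sum_(i < L) a i * coord R g i.

(* S (a set of genotypes) is a cell of the regular subdivision induced by w:
   S is the set of vertices g whose lifted points (g, w g) lie on an upper face
   of conv{(g, w g)}, i.e. on which some affine function psi with psi >= w at
   all vertices attains equality (psi(g) = w g exactly for g in S). *)
Definition induced_cell (R : realType) (L : nat) (w : genotype L -> R)
    (S : {set genotype L}) : Prop :=
  exists (a : 'I_L -> R) (b : R),
    forall g : genotype L, w g <= aff a b g /\ (g \in S <-> w g = aff a b g).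

(* A subdivision of the vertex set is described by its collection of cells. *)
Definition induces (R : realType) (L : nat) (w : genotype L -> R)
    (T : {set genotype L} -> Prop) : Prop :=
  forall S, T S <-> induced_cell w S.

Definition affinely_independent (R : realType) (L : nat) (S : {set genotype L}) : Prop :=
  forall c : genotype L -> R,
    \sum_(g in S) c g = 0 ->
    (forall i : 'I_L, \sum_(g in S) c g * coord R g i = 0) ->
    forall g, g \in S -> c g = 0.

Definition is_triangulation (R : realType) (L : nat) (T : {set genotype L} -> Prop) : Prop :=
  forall S, T S -> affinely_independent R S.

Definition regular_triangulation (R : realType) (L : nat) (T : {set genotype L} -> Prop) : Prop :=
  exists w : genotype L -> R, induces w T /\ is_triangulation R T.

Definition generic (R : realType) (L : nat) (w : genotype L -> R) : Prop :=
  injective w /\ is_triangulation R (induced_cell w).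

Definition hamming_neighbour (L : nat) (g h : genotype L) : bool :=
  #|[set i : 'I_L | g i != h i]| == 1%N.

Definition is_peak (R : realType) (L : nat) (w : genotype L -> R) (g : genotype L) : Prop :=
  forall h, hamming_neighbour g h -> w h < w g.

(* Main.v *)
Require Import Defs.
From HB Require Import structures.
From mathcomp Require Import all_boot all_order all_algebra.
From mathcomp Require Import reals.
From mathcomp Require Import zify ring lra.
Import Order.TTheory GRing.Theory Num.Theory.
Local Open Scope ring_scope.

Lemma affD (R : realType) (L : nat) (a a' : 'I_L -> R) b b' g :
  aff a b g + aff a' b' g = aff (fun i => a i + a' i) (b + b') g.
Proof.
rewrite /aff addrACA -big_split /=; congr (_ + _); apply: eq_bigr => i _.
by rewrite mulrDl.
Qed.

Lemma affN (R : realType) (L : nat) (a : 'I_L -> R) b g :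
  - aff a b g = aff (fun i => - a i) (- b) g.
Proof.
rewrite /aff opprD -sumrN; congr (_ + _); apply: eq_bigr => i _.
by rewrite mulNr.
Qed.

Lemma cell_shift (R : realType) (L : nat) (w w2 : genotype L -> R) a' b' S :
  (forall g, w2 g = w g + aff a' b' g) ->
  induced_cell w S -> induced_cell w2 S.
Proof.
move=> Hw [a [b H]]; exists (fun i => a i + a' i), (b + b').
move=> g; rewrite Hw -affD lerD2r; have [H1 H2] := H g; split => //.
rewrite H2; split; [by move=> ->| by move/addIr].
Qed.

Lemma pow2_sum0 n (c : 'I_n -> int) : (forall i, `|c i| <= 1) ->
  \sum_(i < n) c i * 2 ^+ i = 0 -> forall i, c i = 0.
Proof.
elim: n c => [|n IH] c Hc Hs i; first by case: i.
move: Hs; rewrite big_ord_recl /= expr0 mulr1.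
have -> : \sum_(i < n) c (lift ord0 i) * 2 ^+ (lift ord0 i) =
          2 * \sum_(i < n) c (lift ord0 i) * 2 ^+ i.
  rewrite mulr_sumr; apply: eq_bigr => j _; rewrite lift0 exprS; ring.
set s := \sum_(i < n) _ => H.
have := Hc ord0; rewrite ler_norml => /andP [h1 h2].
have s0 : s = 0 by lia.
have c0 : c ord0 = 0 by lia.
case: (unliftP ord0 i) => [j ->|->] //.
by apply: (IH (fun j => c (lift ord0 j))).
Qed.

Lemma aff_diff1 (R : realType) (L : nat) (a : 'I_L -> R) b (g h : genotype L) j :
  (forall i, i != j -> g i = h i) ->
  aff a b g - aff a b h = a j * (Defs.coord R g j - Defs.coord R h j).
Proof.
move=> H; rewrite /aff opprD addrACA subrr add0r -sumrB (bigD1 j) //=.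
rewrite big1 ?addr0 ?mulrBr // => i Hi; by rewrite /Defs.coord H // subrr.
Qed.

Theorem corollary1 (R : realType) (L : nat) (T : {set genotype L} -> Prop) :
  regular_triangulation R T ->
  exists w : genotype L -> R,
    [/\ generic w, (forall g, 0 <= w g), induces w T
      & exists g, is_peak w g /\ forall h, is_peak w h -> h = g].
Proof.
move=> [w0 [Hind Htri]].
pose K := \sum_(g : genotype L) `|w0 g|.
have HK g : `|w0 g| <= K.
  by rewrite /K (bigD1 g) //= lerDl sumr_ge0.
have K0 : 0 <= K by apply: le_trans (HK [ffun=> true]).
pose M := 2 * K + 1.
pose a := fun i : 'I_L => M * 2 ^+ i.
pose w := fun g => w0 g + aff a K g.
have Hcell S : induced_cell w S <-> induced_cell w0 S.
  split; first apply: (@cell_shift _ _ w w0 (fun i => - a i) (- K)).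
    by move=> g; rewrite -affN /w addrK.
  by apply: (@cell_shift _ _ w0 w a K).
have Hdiff (g h : genotype L) (j : 'I_L) : (forall i, i != j -> g i = h i) ->
    w g - w h = w0 g - w0 h + M * 2 ^+ j * (Defs.coord R g j - Defs.coord R h j).
  move=> /(@aff_diff1 _ _ a K) E; rewrite /w -E /a; ring.
exists w; split.
- split.
  + move=> g h E.
    case: (pickP (fun i => g i != h i)) => [j Hj | H0]; last first.
      by apply/ffunP => i; move: (H0 i) => /negbFE/eqP.
    exfalso.
    pose c := fun i => ((g i : nat) : int) - ((h i : nat) : int).
    have Hc i : `|c i| <= 1 by rewrite /c; case: (g i); case: (h i).
    set s := \sum_(i < L) c i * 2 ^+ i.
    have s0 : s != 0.
      apply/negP => /eqP s0; have := @pow2_sum0 L c Hc s0 j.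
      by move: Hj; rewrite /c; case: (g j); case: (h j).
    have s1 : 1 <= `|s| by lia.
    have E2 : w g - w h = w0 g - w0 h + M * s%:~R.
      rewrite /w opprD addrACA; congr (_ + _).
      rewrite /aff opprD addrACA subrr add0r -sumrB /s rmorph_sum mulr_sumr.
      apply: eq_bigr => i _; rewrite rmorphM /= /a /Defs.coord /c.
        by case: (g i); case: (h i) => /=; rewrite ?rmorphB ?rmorphXn /= ?pmulrn; ring.
    move: E2; rewrite E subrr.
    have t1 : 1 <= `|s%:~R : R| by rewrite -intr_norm ler1z.
    move: t1; rewrite ler_normr => t1.
    have := HK g; have := HK h; rewrite !ler_norml => /andP [h1 h2] /andP [h3 h4].
    rewrite /M; case/orP: t1 => t1 E2; nra.
  + move=> S /Hcell /Hind; exact: Htri.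
- move=> g; rewrite /w /aff addrA; apply: addr_ge0.
    by have := HK g; rewrite ler_norml => /andP [h1 _]; lra.
  apply: sumr_ge0 => i _; rewrite /a /Defs.coord; apply: mulr_ge0 => //.
  by apply: mulr_ge0; [rewrite /M; lra | apply: exprn_ge0].
- by move=> S; rewrite Hind Hcell.
exists [ffun=> true]; split.
- move=> h /cards1P [j Hj].
  have Ho i : i != j -> [ffun=> true] i = h i.
    move=> ne; apply/eqP; apply/negPn/negP => ne2.
    have : i \in [set i | [ffun=> true] i != h i] by rewrite inE.
    by rewrite Hj inE (negbTE ne).
  have hj : h j = false.
    have : j \in [set i | [ffun=> true] i != h i] by rewrite Hj inE.
    by rewrite inE ffunE; case: (h j).
  have := Hdiff _ _ j Ho; rewrite /Defs.coord hj ffunE /=.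
  have p1 : 1 <= (2 : R) ^+ j by apply: exprn_ege1; lra.
  have := HK h; have := HK [ffun=> true]; rewrite !ler_norml => /andP [h1 h2] /andP [h3 h4].
  rewrite /M => D; nra.
- move=> g Hg.
  case: (pickP (fun i => ~~ g i)) => [j Hj | H0]; last first.
    by apply/ffunP => i; rewrite ffunE; move: (H0 i) => /negbFE.
  exfalso.
  pose h : genotype L := [ffun i => if i == j then true else g i].
  have Hh : hamming_neighbour g h.
    rewrite /hamming_neighbour.
    have -> : [set i | g i != h i] = [set j]; last by rewrite cards1.
    apply/setP => i; rewrite !inE ffunE; case: (eqVneq i j) => [->|ne].
      by case: (g j) Hj.
    by rewrite eqxx.
  have Ho i : i != j -> h i = g i by move=> ne; rewrite ffunE (negbTE ne).
  have := Hdiff _ _ j Ho; rewrite /Defs.coord ffunE eqxx (negbTE Hj) /=.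
  have p1 : 1 <= (2 : R) ^+ j by apply: exprn_ege1; lra.
  have := Hg h Hh.
  have := HK h; have := HK g; rewrite !ler_norml => /andP [h1 h2] /andP [h3 h4].
  rewrite /M => lt D; nra.
Qed.
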